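(* Let $q>1$ and $m,n\in\mathbb{N}$. Then $U_{n,q}(e_m;z)$ is a polynomial in $z$ of degree at most $\min(m,n)$, and \[U_{n,q}(e_m;z)=\frac{[n-1]_q!}{[n+m-1]_q!}\sum_{s=1}^m S_q(m,s)\,[n]_q^s\,B_{n,q}(e_s;z).\]
   Context: For an integer $n\ge 0$ and $p>0$: $[n]_p=1+p+\dots+p^{n-1}$ ($[0]_p=0$), $[n]_p!=[1]_p\cdots[n]_p$ ($[0]_p!=1$), $\left[\begin{smallmatrix}n\\k\end{smallmatrix}\right]_p=\frac{[n]_p!}{[k]_p![n-k]_p!}$. For $z\in\mathbb{C}$, $(1-z)_p^n=\prod_{s=0}^{n-1}(1-p^s z)$ and $p_{n,k}(p;z)=\left[\begin{smallmatrix}n\\k\end{smallmatrix}\right]_p z^k(1-z)_p^{n-k}$. For $0<p<1$, $\int_0^1 g(t)\,d_pt=(1-p)\sum_{j=0}^\infty g(p^j)p^j$. For $q>1$, $n\in\mathbb{N}$ and $f:[0,1]\to\mathbb{C}$, \[U_{n,q}(f;z)=f(0)p_{n,0}(q;z)+f(1)p_{n,n}(q;z)+[n-1]_{q^{-1}}\sum_{k=1}^{n-1}q^{k-1}p_{n,k}(q;z)\int_0^1 p_{n-2,k-1}(q^{-1};q^{-1}t)\,f(q^{k-n}t)\,d_{q^{-1}}t\] (sum empty for $n=1$). $e_m(t)=t^m$. The numbers $S_q(m,s)$ are defined by the polynomial identity $\prod_{s=0}^{m-1}(q^sx+[s]_q)=\sum_{s=1}^m S_q(m,s)x^s$ in the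 variable $x$ (so that $[k]_q[k+1]_q\cdots[k+m-1]_q=\sum_{s=1}^mS_q(m,s)[k]_q^s$). $B_{n,q}(e_s;z)=\sum_{k=0}^n\left(\frac{[k]_q}{[n]_q}\right)^s p_{n,k}(q;z)$ is the $q$-Bernstein polynomial of $e_s$. *)

(* Defs.v *)
From HB Require Import structures.
From mathcomp Require Import all_boot all_order all_algebra.
From mathcomp Require Import all_classical all_reals.
From mathcomp Require Import topology normedtype sequences.
From mathcomp Require Import complex.
Set Implicit Arguments. Unset Strict Implicit. Unset Printing Implicit Defensive.
Import Order.TTheory GRing.Theory Num.Theory.
Import numFieldNormedType.Exports.
Local Open Scope ring_scope.

Section QDefs.
Variable F : fieldType.

Definition qint (p : F) (n : nat) : F := \sum_(i < n) p ^+ i.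
Definition qfact (p : F) (n : nat) : F := \prod_(i < n) qint p i.+1.
Definition qbinom (p : F) (n k : nat) : F :=
  qfact p n / (qfact p k * qfact p (n - k)).
Definition qpoch (p z : F) (n : nat) : F := \prod_(s < n) (1 - p ^+ s * z).
Definition pnk (p : F) (n k : nat) (z : F) : F :=
  qbinom p n k * z ^+ k * qpoch p z (n - k).
End QDefs.

Section Operator.
Variable R : realType.
Local Open Scope complex_scope.

(* Jackson q-integral on [0,1] of a real function, 0 < p < 1:
   (1-p) * sum_{j>=0} g(p^j) p^j  (value of the convergent series). *)
Definition jackson (p : R) (g : R -> R) : R :=
  (1 - p) * limn (fun N => \sum_(j < N) g (p ^+ j) * p ^+ j).

Definition jacksonC (p : R) (g : R -> R[i]) : R[i] :=
  (jackson p (fun t => complex.Re (g t)))%:C +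
  'i * (jackson p (fun t => complex.Im (g t)))%:C.

(* U_{n,q}(f; z) for f : [0,1] -> C (given as a function on R; only its
   values on [0,1] are used). *)
Definition Uop (q : R) (n : nat) (f : R -> R[i]) (z : R[i]) : R[i] :=
  f 0 * pnk (q%:C) n 0 z + f 1 * pnk (q%:C) n n z +
  (qint (q^-1) n.-1)%:C *
    \sum_(1 <= k < n)
      (q ^+ k.-1)%:C * pnk (q%:C) n k z *
      jacksonC (q^-1) (fun t => (pnk (q^-1) (n - 2) k.-1 (q^-1 * t))%:C *
                                  f (q ^- (n - k) * t)).

Definition emon (m : nat) : R -> R[i] := fun t => (t ^+ m)%:C.

Definition Sq (q : R) (m s : nat) : R :=
  (\prod_(j < m) ((q ^+ j)%:P * 'X + (qint q j)%:P))`_s.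

Definition Bq_e (q : R) (n s : nat) (z : R[i]) : R[i] :=
  \sum_(k < n.+1) ((qint q k / qint q n) ^+ s)%:C * pnk (q%:C) n k z.
End Operator.

(* Main.v *)
Require Import Defs.
From HB Require Import structures.
From mathcomp Require Import all_boot all_order all_algebra.
From mathcomp Require Import all_classical all_reals.
From mathcomp Require Import topology normedtype sequences.
From mathcomp Require Import complex.
From mathcomp Require Import zify ring lra.
Import Order.TTheory GRing.Theory Num.Theory.
Import numFieldNormedType.Exports.
Local Open Scope ring_scope.
Set Implicit Arguments. Unset Strict Implicit. Unset Printing Implicit Defensive.

Local Open Scope ring_scope.

Section QAlg.
Variable F : fieldType.
Variable p : F.
Hypothesis Hp : forall j, qint p j.+1 != 0.

Lemma qint0 : qint p 0 = 0. Proof. by rewrite /qint big_ord0. Qed.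
Lemma qintS n : qint p n.+1 = qint p n + p ^+ n.
Proof. by rewrite /qint big_ord_recr. Qed.
Lemma qintD a b : qint p (a + b) = qint p a + p ^+ a * qint p b.
Proof.
rewrite /qint big_split_ord /= mulr_sumr; congr (_ + _).
by apply: eq_bigr => i _; rewrite exprD.
Qed.
Lemma qfact0 : qfact p 0 = 1. Proof. by rewrite /qfact big_ord0. Qed.
Lemma qfactS n : qfact p n.+1 = qfact p n * qint p n.+1.
Proof. by rewrite /qfact big_ord_recr. Qed.
Lemma qfact_neq0 n : qfact p n != 0.
Proof. elim: n => [|n IH]; first by rewrite qfact0 oner_neq0.
by rewrite qfactS mulf_neq0. Qed.
Lemma qfactD a b : qfact p (a + b) = qfact p a * \prod_(j < b) qint p (a + j).+1.
Proof. by rewrite /qfact big_split_ord. Qed.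

Lemma qbinom_sym n k : (k <= n)%N -> qbinom p n (n - k) = qbinom p n k.
Proof. by move=> hk; rewrite /qbinom subKn // [qfact p (n - k) * _]mulrC. Qed.

Lemma qbinom_nn n : qbinom p n n = 1.
Proof. by rewrite /qbinom subnn qfact0 mulr1 divff // qfact_neq0. Qed.
Lemma qbinom_n0 n : qbinom p n 0 = 1.
Proof. by rewrite /qbinom subn0 qfact0 mul1r divff // qfact_neq0. Qed.

Lemma qbinom_mul n j k : (k <= j)%N -> (j <= n)%N ->
  qbinom p n k * qbinom p (n - k) (j - k) = qbinom p n j * qbinom p j k.
Proof.
move=> hkj hjn; rewrite /qbinom.
have -> : (n - k - (j - k) = n - j)%N by lia.
have h1 := qfact_neq0 n; have h2 := qfact_neq0 k; have h3 := qfact_neq0 (n - k).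
have h4 := qfact_neq0 (j - k); have h5 := qfact_neq0 (n - j); have h6 := qfact_neq0 j.
by field; rewrite ?h1 ?h2 ?h3 ?h4 ?h5 ?h6.
Qed.

Definition qb n k := if (k <= n)%N then qbinom p n k else 0.

Lemma qb_pascal M k : qb M.+1 k.+1 = qb M k.+1 + p ^+ (M - k) * qb M k.
Proof.
rewrite /qb; case: (ltngtP k M) => hk.
- have e1 : (k.+1 <= M.+1)%N = true by lia.
  have e2 : (k.+1 <= M)%N = true by lia.
  have e3 : (k <= M)%N = true by lia.
  rewrite e1.
  have [d ->] : exists d, M = (k + d.+1)%N by exists (M - k.+1)%N; lia.
  rewrite /qbinom.
  have -> : ((k + d.+1).+1 - k.+1 = d.+1)%N by lia.
  have -> : (k + d.+1 - k.+1 = d)%N by lia.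
  have -> : (k + d.+1 - k = d.+1)%N by lia.
  rewrite (qfactS (k + d.+1)) (qfactS k) (qfactS d).
  have -> : (k + d.+1).+1 = (d.+1 + k.+1)%N by lia.
  rewrite qintD.
  have h1 := qfact_neq0 (k + d.+1); have h2 := qfact_neq0 k; have h3 := qfact_neq0 d.
  have h4 := Hp k; have h5 := Hp d.
  by field; rewrite ?h1 ?h2 ?h3 ?h4 ?h5.
- have e1 : (k.+1 <= M.+1)%N = false by lia.
  have e2 : (k.+1 <= M)%N = false by lia.
  have e3 : (k <= M)%N = false by lia.
  by rewrite e1 mulr0 addr0.
- by rewrite hk ltnSn subnn expr0 mul1r add0r !qbinom_nn.
Qed.

Lemma qb_0 M : qb M 0 = 1.
Proof. by rewrite /qb leq0n qbinom_n0. Qed.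

Definition Cp M : {poly F} := \prod_(s < M) (1 - (p ^+ s)%:P * 'X).

Lemma Cp_coef M i : (Cp M)`_i = (-1) ^+ i * p ^+ 'C(i, 2) * qb M i.
Proof.
elim: M i => [|M IH] i.
  rewrite /Cp big_ord0 coefC /qb; case: i => [|i] /=.
    by rewrite qbinom_n0 !mulr1.
  by rewrite mulr0.
rewrite /Cp big_ord_recr /= -/(Cp M) mulrBr mulr1 coefB.
rewrite mulrCA mul_polyC coefZ coefMX.
case: i => [|i] /=.
  by rewrite mulr0 subr0 IH !qb_0.
rewrite !IH qb_pascal.
case: (leqP i M) => hi.
- have -> : 'C(i.+1, 2) = ('C(i, 2) + i)%N by rewrite binS bin1 addnC.
  have -> : M = (i + (M - i))%N by lia.
  rewrite addKn !exprD exprS; ring.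
- have e1 : (i.+1 <= M.+1)%N = false by lia.
  have e2 : (i.+1 <= M)%N = false by lia.
  have e3 : (i <= M)%N = false by lia.
  by rewrite /qb e2 e3 !(mulr0, addr0, subr0).
Qed.

Lemma Cp_horner M x : (Cp M).[x] = \prod_(s < M) (1 - p ^+ s * x).
Proof.
rewrite /Cp horner_prod; apply: eq_bigr => s _.
by rewrite hornerD hornerN hornerC hornerCM hornerX.
Qed.
End QAlg.

Local Open Scope ring_scope.

Section Deg.
Variable F : fieldType.
Variable p : F.
Hypothesis Hp : forall j, qint p j.+1 != 0.
Hypothesis Hp0 : p != 0.

Definition BP n (g : nat -> F) : {poly F} :=
  \sum_(k < n.+1) (g k * qbinom p n k)%:P * 'X^k * Cp p (n - k).

Lemma BP_horner n g z : (BP n g).[z] = \sum_(k < n.+1) g k * pnk p n k z.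
Proof.
rewrite /BP horner_sum; apply: eq_bigr => k _.
by rewrite hornerM hornerCM hornerXn Cp_horner /pnk /qpoch !mulrA.
Qed.

Lemma BP_coef n g j : (BP n g)`_j =
  \sum_(k < n.+1) g k * qbinom p n k * (if (j < k)%N then 0 else (Cp p (n - k))`_(j - k)).
Proof.
rewrite /BP coef_sum; apply: eq_bigr => k _.
by rewrite -mulrA coefCM coefXnM.
Qed.

Lemma Cp_size M : (size (Cp p M) <= M.+1)%N.
Proof.
apply/leq_sizeP => j hj; rewrite (Cp_coef Hp) /qb.
have -> : (j <= M)%N = false by lia.
by rewrite !mulr0.
Qed.

Lemma BP_coef_big n g j : (n < j)%N -> (BP n g)`_j = 0.
Proof.
move=> hj; rewrite BP_coef big1 // => k _.
case: ifP => _; first by rewrite mulr0.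
rewrite (Cp_coef Hp) /qb.
have -> : (j - k <= n - k)%N = false by have := ltn_ord k; lia.
by rewrite !mulr0.
Qed.

Lemma Cp_root j r : (r < j)%N -> (Cp p j).[(p ^+ r)^-1] = 0.
Proof.
move=> hr; rewrite Cp_horner (bigD1 (Ordinal hr)) //= divff ?subrr ?mul0r //.
by rewrite expf_neq0.
Qed.

Lemma BP_coef_vanish n d (G : nat -> F) j :
  (d <= j)%N -> (BP n (fun k => \sum_(r < d) G r * (p ^+ r) ^+ k))`_j = 0.
Proof.
move=> hdj; case: (ltnP n j) => hjn; first exact: BP_coef_big.
set g := (fun k => _).
rewrite BP_coef.
pose H k := g k * qbinom p n k *
   (if (j < k)%N then 0 else (Cp p (n - k))`_(j - k)).
rewrite -/(\sum_(k < n.+1) H k).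
have step1 : \sum_(k < n.+1) H k = \sum_(k < j.+1) H k.
  symmetry; rewrite (big_ord_widen n.+1 H _) ?ltnS // big_mkcond /=.
  apply: eq_bigr => k _; case: ifP => // /negbT; rewrite -leqNgt => hk.
  by rewrite /H hk mulr0.
have step2 : \sum_(k < j.+1) H k = qbinom p n j *
   \sum_(k < j.+1) g k * (qbinom p j k * ((-1) ^+ (j - k) * p ^+ 'C(j - k, 2))).
  rewrite mulr_sumr; apply: eq_bigr => k _.
  have hk : (k <= j)%N by have := ltn_ord k; lia.
  rewrite /H ltnNge hk /= (Cp_coef Hp) /qb.
  have -> : (j - k <= n - k)%N = true by lia.
  have e := qbinom_mul Hp hk hjn.
  transitivity (g k * (qbinom p n k * qbinom p (n - k) (j - k)) *
    ((-1) ^+ (j - k) * p ^+ 'C(j - k, 2))); first by ring.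
  rewrite e; ring.
have step3 : \sum_(k < j.+1) g k * (qbinom p j k * ((-1) ^+ (j - k) * p ^+ 'C(j - k, 2)))
   = \sum_(i < j.+1) g (j - i)%N * (Cp p j)`_i.
  rewrite (reindex_inj rev_ord_inj) /=; apply: eq_bigr => i _.
  have hi : (i <= j)%N by have := ltn_ord i; lia.
  rewrite subSS (Cp_coef Hp) /qb hi qbinom_sym // subKn //; ring.
have step4 : \sum_(i < j.+1) g (j - i)%N * (Cp p j)`_i =
   \sum_(r < d) G r * ((p ^+ r) ^+ j * (Cp p j).[(p ^+ r)^-1]).
  rewrite /g; under eq_bigr do rewrite mulr_suml.
  rewrite exchange_big /=; apply: eq_bigr => r _.
  rewrite (horner_coef_wide _ (Cp_size j)) !mulr_sumr; apply: eq_bigr => i _.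
  have hi : (i <= j)%N by have := ltn_ord i; lia.
  have hu : (p ^+ r) \is a GRing.unit by rewrite unitfE expf_neq0.
  rewrite exprB // exprVn; ring.
rewrite step1 step2 step3 step4 big1 ?mulr0 // => r _.
by rewrite Cp_root ?mulr0 //; apply: leq_trans (ltn_ord r) hdj.
Qed.
End Deg.

Local Open Scope ring_scope.

Section Beta.
Variable F : fieldType.
Variable p : F.
Hypothesis Hp : forall j, qint p j.+1 != 0.

Definition Lf (P : {poly F}) := \sum_(j < size P) P`_j / qint p j.+1.

Lemma Lf_wide N (P : {poly F}) : (size P <= N)%N -> Lf P = \sum_(j < N) P`_j / qint p j.+1.
Proof.
move=> h; rewrite /Lf (big_ord_widen N (fun j => P`_j / qint p j.+1) h) big_mkcond; apply: eq_bigr => j _.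
case: ifP => // /negbT; rewrite -leqNgt => hj.
by rewrite nth_default // mul0r.
Qed.

Lemma LfB (P Q : {poly F}) c : Lf (P - c *: Q) = Lf P - c * Lf Q.
Proof.
set N := (size P + size Q)%N.
have h1 : (size P <= N)%N by rewrite leq_addr.
have h2 : (size Q <= N)%N by rewrite leq_addl.
have h3 : (size (P - c *: Q)%R <= N)%N.
  apply: (leq_trans (size_add _ _)); rewrite geq_max h1 size_opp.
  exact: (leq_trans (size_scale_leq _ _) h2).
rewrite (Lf_wide h1) (Lf_wide h2) (Lf_wide h3) mulr_sumr -sumrB.
by apply: eq_bigr => j _; rewrite coefB coefZ mulrBl mulrA.
Qed.

Lemma LfZ (Q : {poly F}) c : Lf (c *: Q) = c * Lf Q.
Proof.
have := LfB 0 Q (- c).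
rewrite sub0r scaleNr opprK => ->.
by rewrite /Lf size_poly0 big_ord0 sub0r mulNr opprK.
Qed.

Lemma LfXn a : Lf 'X^a = (qint p a.+1)^-1.
Proof.
rewrite /Lf size_polyXn big_ord_recr /= big1 ?add0r => [|j _].
  by rewrite coefXn eqxx mul1r.
by rewrite coefXn (ltn_eqF (ltn_ord j)) mul0r.
Qed.

Definition Qb b : {poly F} := \prod_(s < b) (1 - (p ^+ s.+1)%:P * 'X).
Definition Jb a b := Lf ('X^a * Qb b).

Lemma Jb_val b a : Jb a b = qfact p a * qfact p b / qfact p (a + b).+1.
Proof.
elim: b a => [|b IH] a.
  rewrite /Jb /Qb big_ord0 mulr1 LfXn qfact0 addn0 qfactS.
  have h := qfact_neq0 Hp a; have h' := Hp a.
  by field; rewrite ?h ?h'.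
have e : 'X^a * Qb b.+1 = 'X^a * Qb b - p ^+ b.+1 *: ('X^(a.+1) * Qb b).
  rewrite /Qb big_ord_recr /= -/(Qb b) -mul_polyC (exprS 'X a).
  set Y := 'X^a; set c := (p ^+ b.+1)%:P; ring.
rewrite /Jb e LfB -/(Jb a b) -/(Jb a.+1 b) !IH.
rewrite addSn !addnS !qfactS.
have -> : (a + b).+2 = (b.+1 + a.+1)%N by lia.
rewrite qintD.
have h1 := qfact_neq0 Hp a; have h2 := qfact_neq0 Hp b; have h3 := qfact_neq0 Hp (a + b).
have h4 := Hp (a + b); have h5 := Hp a; have h6 := Hp b.
have h7 : qint p b.+1 + p ^+ b.+1 * qint p a.+1 != 0.
  by rewrite -qintD; apply: Hp.
by field; rewrite ?h1 ?h2 ?h3 ?h4 ?h5 ?h6 ?h7.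
Qed.
End Beta.

Local Open Scope ring_scope.
Local Open Scope classical_set_scope.

Lemma qint_mul1 (F : fieldType) (p : F) n : (1 - p) * qint p n = 1 - p ^+ n.
Proof.
rewrite /qint; have := subrX1 p n => e.
by rewrite -opprB mulNr -e opprB.
Qed.

Lemma qint_gt0 (R : realFieldType) (p : R) n : 0 <= p -> 0 < qint p n.+1.
Proof.
move=> p0; rewrite /qint big_ord_recl expr0 ltr_pwDl //.
by apply: sumr_ge0 => i _; rewrite exprn_ge0.
Qed.

Lemma jackson_poly (R : realType) (p : R) (P : {poly R}) : 0 < p < 1 ->
  jackson p (fun t => P.[t]) = \sum_(j < size P) P`_j / qint p j.+1.
Proof.
move=> /andP [p0 p1].
have Hs : forall N, \sum_(i < N) P.[p ^+ i] * p ^+ i =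
   \sum_(j < size P) P`_j * series (geometric 1 (p ^+ j.+1)) N.
  move=> N; under eq_bigr do rewrite horner_coef mulr_suml.
  rewrite exchange_big /=; apply: eq_bigr => j _.
  rewrite /series /= /geometric /= big_mkord mulr_sumr; apply: eq_bigr => i _.
  by rewrite mul1r -mulrA -!exprM -exprD; congr (_ * _ ^+ _); lia.
rewrite /jackson.
have -> : (fun N => \sum_(j < N) P.[p ^+ j] * p ^+ j) =
   (fun N => \sum_(j < size P) P`_j * series (geometric 1 (p ^+ j.+1)) N).
  by apply: funext => N; rewrite Hs.
have cv : (fun N => \sum_(j < size P) P`_j * series (geometric 1 (p ^+ j.+1)) N) @ \oo
   --> \sum_(j < size P) P`_j * (1 * (1 - p ^+ j.+1)^-1).
  apply: cvg_big => [|j _]; first exact: add_continuous.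
  apply: cvgMl_tmp; apply: cvg_geometric_series.
  rewrite ger0_norm ?exprn_ge0 ?ltW //.
  by rewrite exprn_ilt1 // ltW.
rewrite (cvg_lim _ cv) // mulr_sumr; apply: eq_bigr => j _.
rewrite mul1r -(qint_mul1 p j.+1); field.
by rewrite gt_eqF ?qint_gt0 ?ltW // subr_eq0 eq_sym lt_eqF.
Qed.

Local Open Scope ring_scope.
Local Open Scope classical_set_scope.
Local Open Scope ring_scope.

Lemma bin2S n : 'C(n.+1, 2) = ('C(n, 2) + n)%N.
Proof. by rewrite binS bin1. Qed.

Lemma bin2D x y : 'C(x + y, 2) = ('C(x, 2) + 'C(y, 2) + x * y)%N.
Proof.
elim: y => [|y IH]; first by rewrite addn0 bin0n // muln0 !addn0.
rewrite addnS !bin2S IH; lia.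
Qed.

Section Num.
Variable R : realType.
Variable q : R.
Hypothesis q1 : 1 < q.

Let q0 : 0 < q. Proof. by apply: lt_trans q1. Qed.
Let qn0 : q != 0. Proof. by rewrite gt_eqF. Qed.
Let Hq : forall j, qint q j.+1 != 0.
Proof. by move=> j; rewrite gt_eqF // qint_gt0 // ltW. Qed.
Let Hp : forall j, qint q^-1 j.+1 != 0.
Proof. by move=> j; rewrite gt_eqF // qint_gt0 // invr_ge0 ltW. Qed.

Lemma qint_inv M : qint q^-1 M.+1 * q ^+ M = qint q M.+1.
Proof.
rewrite /qint mulr_suml (reindex_inj rev_ord_inj) /=; apply: eq_bigr => i _.
have hi : (i <= M)%N by have := ltn_ord i; lia.
by rewrite subSS exprVn exprB ?unitfE //; field; rewrite !expf_neq0.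
Qed.

Lemma qfact_inv M : qfact q^-1 M * q ^+ 'C(M, 2) = qfact q M.
Proof.
elim: M => [|M IH]; first by rewrite !qfact0 bin0n expr0 mulr1.
rewrite !qfactS bin2S exprD -IH -qint_inv; ring.
Qed.

Lemma num_id c0 e m :
  qint q^-1 (c0 + e.+1) * q ^+ c0 *
   (qbinom q^-1 (c0 + e) c0 * q^-1 ^+ c0 * (q ^- e.+1) ^+ m *
     (qfact q^-1 (c0 + m) * qfact q^-1 e / qfact q^-1 (c0 + m + e).+1))
  = qfact q (c0 + e.+1) / qfact q (c0 + e.+1 + m) *
     \prod_(j < m) qint q (c0.+1 + j).
Proof.
have -> : \prod_(j < m) qint q (c0.+1 + j) = qfact q (c0 + m) / qfact q c0.
  rewrite qfactD mulrC mulKf ?qfact_neq0 //.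
rewrite /qbinom.
have -> : (c0 + e - c0 = e)%N by lia.
have -> : (c0 + m + e).+1 = (c0 + e.+1 + m)%N by lia.
rewrite -!qfact_inv.
have ex : q ^+ 'C(c0 + e.+1 + m, 2) =
   q ^+ 'C(c0 + e.+1, 2) * q ^+ 'C(c0 + m, 2) * (q ^+ e.+1) ^+ m / q ^+ 'C(c0, 2).
  apply: (@mulIf _ (q ^+ 'C(c0, 2))); first by rewrite expf_neq0.
  rewrite mulfVK ?expf_neq0 // -!exprD -exprM -exprD; congr (_ ^+ _).
  rewrite !bin2D; lia.
rewrite ex !exprVn (addnS c0 e) qfactS.
have h1 := qfact_neq0 Hp (c0 + e); have h2 := qfact_neq0 Hp c0; have h3 := qfact_neq0 Hp e.
have h4 := qfact_neq0 Hp (c0 + m).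
have h6 := qfact_neq0 Hp ((c0 + e).+1 + m); have h7 := Hp (c0 + e).
have h8 : q ^+ c0 != 0 by rewrite expf_neq0.
have h9 : (q ^+ e.+1) ^+ m != 0 by rewrite !expf_neq0.
have h10 : q ^+ 'C(c0, 2) != 0 by rewrite expf_neq0.
have h11 : q ^+ 'C((c0 + e).+1, 2) != 0 by rewrite expf_neq0.
have h12 : q ^+ 'C(c0 + m, 2) != 0 by rewrite expf_neq0.
move: h1 h2 h3 h4 h6 h7 h8 h9 h10 h11 h12.
set A1 := qfact q^-1 (c0 + e). set A2 := qfact q^-1 c0. set A3 := qfact q^-1 e.
set A4 := qfact q^-1 (c0 + m). set A6 := qfact q^-1 ((c0 + e).+1 + m).
set Q := qint q^-1 (c0 + e).+1. set B1 := q ^+ c0. set B2 := (q ^+ e.+1) ^+ m.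
set C1 := q ^+ 'C(c0, 2). set C2 := q ^+ 'C((c0 + e).+1, 2). set C3 := q ^+ 'C(c0 + m, 2).
move=> h1 h2 h3 h4 h6 h7 h8 h9 h10 h11 h12.
by field; rewrite ?h1 ?h2 ?h3 ?h4 ?h6 ?h7 ?h8 ?h9 ?h10 ?h11 ?h12.
Qed.


Lemma jack_val c0 e m :
  jackson q^-1 (fun t => pnk q^-1 (c0 + e) c0 (q^-1 * t) * (q ^- e.+1 * t) ^+ m) =
  qbinom q^-1 (c0 + e) c0 * q^-1 ^+ c0 * (q ^- e.+1) ^+ m *
     (qfact q^-1 (c0 + m) * qfact q^-1 e / qfact q^-1 (c0 + m + e).+1).
Proof.
set c := qbinom q^-1 (c0 + e) c0 * q^-1 ^+ c0 * (q ^- e.+1) ^+ m.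
have -> : (fun t => pnk q^-1 (c0 + e) c0 (q^-1 * t) * (q ^- e.+1 * t) ^+ m) =
          (fun t => (c *: ('X^(c0 + m) * Qb q^-1 e)).[t]).
  apply: funext => t.
  rewrite hornerZ hornerM hornerXn /Qb horner_prod /pnk /qpoch.
  have -> : (c0 + e - c0 = e)%N by lia.
  have -> : \prod_(s < e) (1 - q^-1 ^+ s * (q^-1 * t)) =
            \prod_(s < e) (1 - (q^-1 ^+ s.+1)%:P * 'X).[t].
    apply: eq_bigr => s _.
    by rewrite hornerD hornerN hornerC hornerCM hornerX exprSr mulrA.
  rewrite /c !exprMn exprD; ring.
rewrite jackson_poly; last by rewrite invr_gt0 q0 invf_lt1.
rewrite -/(Lf q^-1 _) LfZ -/(Jb q^-1 (c0 + m) e) (Jb_val Hp) /c.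
by rewrite mulrA.
Qed.

Local Open Scope complex_scope.
Lemma jacksonC_real p (h : R -> R) :
  jacksonC p (fun t => (h t)%:C) = (jackson p h)%:C.
Proof.
rewrite /jacksonC /=.
have -> : jackson p (fun t => complex.Im (h t)%:C) = 0.
  rewrite /jackson /=.
  have -> : (fun N => \sum_(j < N) 0 * p ^+ j) = (fun _ => 0 : R).
    by apply: funext => N; rewrite big1 // => j _; rewrite mul0r.
  have -> : limn (fun=> (0:R)) = 0 by apply: cvg_lim => //; exact: cvg_cst.
  by rewrite mulr0.
have -> : (0:R)%:C = 0 by [].
by rewrite mulr0 addr0.
Qed.
End Num.

Local Open Scope ring_scope.
Local Open Scope classical_set_scope.
Local Open Scope ring_scope.
Local Open Scope complex_scope.

Lemma cM (R : realType) (a b : R) : (a * b)%:C = a%:C * b%:C.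
Proof. by rewrite rmorphM. Qed.

Section Main.
Variable R : realType.
Variable q : R.
Hypothesis q1 : 1 < q.

Let q0 : 0 < q. Proof. by apply: lt_trans q1. Qed.
Let qn0 : q != 0. Proof. by rewrite gt_eqF. Qed.
Let Hq : forall j, qint q j.+1 != 0.
Proof. by move=> j; rewrite gt_eqF // qint_gt0 // ltW. Qed.

Definition Acoef n m k : R :=
  qfact q n.-1 / qfact q (n + m).-1 * \prod_(j < m) qint q (k + j).

Lemma U_eq n m z : (0 < m)%N -> (0 < n)%N ->
  Uop q n (emon m) z = \sum_(k < n.+1) (Acoef n m k)%:C * pnk (q%:C) n k z.
Proof.
move=> m0 n0.
rewrite /Uop {1 2}/emon expr0n expr1n.
have -> : (m == 0%N) = false by lia.
have -> : ((false%:R : R)%:C) = 0 by [].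
have -> : ((1 : R)%:C) = 1 by [].
rewrite mul0r add0r mul1r.
rewrite -(big_mkord xpredT (fun k => (Acoef n m k)%:C * pnk (q%:C) n k z)).
rewrite big_nat_recr // big_ltn //.
have -> : Acoef n m 0 = 0.
  have [m1 mE] : exists m1, m = m1.+1 by exists m.-1; lia.
  by rewrite /Acoef mE big_ord_recl /= qint0 mul0r mulr0.
have -> : Acoef n m n = 1.
  rewrite /Acoef.
  have e1 : (n + m).-1 = (n.-1 + m)%N by lia.
  have e2 : \prod_(j < m) qint q (n + j) = \prod_(j < m) qint q (n.-1 + j).+1.
    by apply: eq_bigr => j _; congr qint; lia.
  rewrite e1 e2 qfactD; field.
  by rewrite qfact_neq0 // andbT; apply/prodf_neq0 => j _; apply: Hq.
have -> : ((0 : R)%:C) = 0 by [].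
have -> : ((1 : R)%:C) = 1 by [].
rewrite /= mul0r add0r mul1r addrC; congr (_ + _).
rewrite mulr_sumr; apply: eq_big_nat => k /andP [k1 kn].
have [c0 kE] : exists c0, k = c0.+1 by exists k.-1; lia.
have [e nE] : exists e, n = (c0 + e.+1).+1 by exists (n - k - 1)%N; lia.
rewrite kE nE /=.
have -> : ((c0 + e.+1).+1 - 2 = c0 + e)%N by lia.
have -> : ((c0 + e.+1).+1 - c0.+1 = e.+1)%N by lia.
have -> : (fun t => (pnk q^-1 (c0 + e) c0 (q^-1 * t))%:C * emon m (q ^- e.+1 * t)) =
          (fun t => (pnk q^-1 (c0 + e) c0 (q^-1 * t) * (q ^- e.+1 * t) ^+ m)%:C).
  apply: funext => t. rewrite /emon. rewrite [RHS]rmorphM. reflexivity.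
rewrite jacksonC_real jack_val //.
set P := pnk _ _ _ _.
set V := (qbinom _ _ _ * _ * _ * _).
transitivity ((qint q^-1 (c0 + e.+1) * q ^+ c0 * V)%:C * P); first by rewrite !cM; ring.
congr (_ * _); congr (_%:C).
rewrite /Acoef /=.
by rewrite -(num_id q1).
Qed.

Lemma size_linprod (c d : nat -> R) m :
  (size (\prod_(j < m) ((c j)%:P * 'X + (d j)%:P))%R <= m.+1)%N.
Proof.
elim: m => [|m IH]; first by rewrite big_ord0 size_poly1.
rewrite big_ord_recr /=.
apply: (leq_trans (size_mul_leq _ _)).
have h : (size ((c m)%:P * 'X + (d m)%:P)%R <= 2)%N.
  apply: (leq_trans (size_add _ _)); rewrite geq_max; apply/andP; split.
    apply: (leq_trans (size_mul_leq _ _)); rewrite size_polyX.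
    by have := size_polyC_leq1 (c m); lia.
  by have := size_polyC_leq1 (d m); lia.
have ar : forall a b M : nat, (a <= M.+1)%N -> (b <= 2)%N -> ((a + b).-1 <= M.+2)%N by move=> *; lia.
exact: ar IH h.
Qed.

Lemma Sq_sum m x : (0 < m)%N ->
  \sum_(1 <= s < m.+1) Sq q m s * x ^+ s = \prod_(j < m) (q ^+ j * x + qint q j).
Proof.
move=> m0.
set Pq := \prod_(j < m) ((q ^+ j)%:P * 'X + (qint q j)%:P).
have hs : (size Pq <= m.+1)%N by apply: size_linprod.
have e0 : Sq q m 0 = 0.
  rewrite /Sq -/Pq -horner_coef0 /Pq horner_prod.
  have [m1 mE] : exists m1, m = m1.+1 by exists m.-1; lia.
  rewrite mE big_ord_recl /= hornerD hornerCM hornerX hornerC qint0 mulr0 add0r.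
  by rewrite mul0r.
have -> : \prod_(j < m) (q ^+ j * x + qint q j) = Pq.[x].
  rewrite /Pq horner_prod; apply: eq_bigr => j _.
  by rewrite hornerD hornerCM hornerX hornerC.
rewrite (horner_coef_wide _ hs) -(big_mkord xpredT (fun s => Pq`_s * x ^+ s)).
by rewrite [in RHS]big_ltn // {2}/Pq -/(Sq q m 0) e0 mul0r add0r.
Qed.
End Main.

Local Open Scope complex_scope.
Lemma cS (R : realType) (I : Type) (r : seq I) (P : pred I) (f : I -> R) :
  (\sum_(i <- r | P i) f i)%:C = \sum_(i <- r | P i) (f i)%:C.
Proof. by rewrite rmorph_sum. Qed.
Lemma cX (R : realType) (x : R) k : (x ^+ k)%:C = x%:C ^+ k.
Proof. by rewrite rmorphXn. Qed.
Lemma cneq0 (R : realType) (x : R) : x != 0 -> x%:C != 0.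
Proof. by move=> hx; apply: contra hx => /eqP h; apply/eqP; exact: (complexI h). Qed.


Unset Implicit Arguments.
Local Open Scope ring_scope.
Local Open Scope complex_scope.

Theorem mainTheorem5 (R : realType) (q : R) (m n : nat) :
  1 < q -> (0 < m)%N -> (0 < n)%N ->
  (exists P : {poly R[i]}, (size P <= (minn m n).+1)%N /\
     forall z : R[i], Uop q n (emon m) z = P.[z]) /\
  (forall z : R[i],
     Uop q n (emon m) z =
     (qfact q n.-1 / qfact q (n + m).-1)%:C *
       \sum_(1 <= s < m.+1) (Sq q m s * qint q n ^+ s)%:C * Bq_e q n s z).
Proof.
move=> q1 m0 n0.
have q0 : 0 < q by apply: lt_trans q1.
have qn0 : q != 0 by rewrite gt_eqF.
have Hq : forall j, qint q j.+1 != 0.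
  by move=> j; rewrite gt_eqF // qint_gt0 // ltW.
have qm1 : q - 1 != 0 by rewrite subr_eq0 gt_eqF.
set c := qfact q n.-1 / qfact q (n + m).-1.
split.
  pose G : {poly R} := c%:P * \prod_(j < m) ((q ^+ j / (q - 1))%:P * 'X + (- (q - 1)^-1)%:P).
  have hG : (size G <= m.+1)%N.
    rewrite /G mul_polyC; apply: (leq_trans (size_scale_leq _ _)).
    exact: (size_linprod q1 (fun j => q ^+ j / (q - 1)) (fun _ => - (q - 1)^-1)).
  have qi : forall N, qint q N = (q ^+ N - 1) / (q - 1).
    by move=> N; rewrite /qint subrX1; field.
  have hA : forall k, Acoef q n m k = G.[q ^+ k].
    move=> k; rewrite /Acoef /G hornerCM horner_prod; congr (_ * _).
    apply: eq_bigr => j _; rewrite hornerD hornerCM hornerX hornerC qi exprD.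
    by field.
  pose g k := \sum_(r < m.+1) (G`_r)%:C * (q%:C ^+ r) ^+ k.
  have hg : forall k, (Acoef q n m k)%:C = g k.
    move=> k; rewrite hA (horner_coef_wide _ hG) cS; apply: eq_bigr => r _.
    by rewrite cM cX cX exprAC.
  have HpC : forall j, qint (q%:C) j.+1 != 0.
    move=> j; have -> : qint (q%:C) j.+1 = (qint q j.+1)%:C.
      by rewrite /qint cS; apply: eq_bigr => i _; rewrite cX.
    exact: cneq0.
  have Hp0 : q%:C != 0 by apply: cneq0.
  exists (BP (q%:C) n g); split.
    apply/leq_sizeP => j hj.
    case: (ltnP m j) => hmj.
      exact: (BP_coef_vanish HpC Hp0 n (fun r => (G`_r)%:C) hmj).
    apply: (BP_coef_big HpC Hp0); move: hj hmj; rewrite /minn; case: ifP; lia.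
  move=> z; rewrite (U_eq q1) // BP_horner; apply: eq_bigr => k _.
  by rewrite hg.
move=> z; rewrite (U_eq q1) //.
rewrite /Bq_e mulr_sumr.
symmetry.
under eq_bigr do rewrite mulr_sumr mulr_sumr.
rewrite exchange_big /=; apply: eq_bigr => k _.
set P := pnk _ _ _ _.
under eq_bigr do rewrite 2!mulrA.
rewrite -mulr_suml; congr (_ * _).
have -> : \sum_(1 <= i < m.+1)
      (c%:C * (Sq q m i * qint q n ^+ i)%:C * ((qint q k / qint q n) ^+ i)%:C)
    = \sum_(1 <= i < m.+1) (c * (Sq q m i * qint q k ^+ i))%:C.
  apply: eq_big_nat => s _; rewrite -!cM; congr (_%:C).
  have [n1 nE] : exists n1, n = n1.+1 by exists n.-1; lia.
  have hn : qint q n ^+ s != 0 by rewrite nE expf_neq0.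
  rewrite expr_div_n; field.
  by rewrite nE expf_neq0.
rewrite -cS -mulr_sumr (Sq_sum q1) // /Acoef; congr (_%:C); congr (_ * _).
apply: eq_bigr => j _.
by rewrite addnC qintD addrC.
Qed.
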